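(* Consider the part-wise coactive learning algorithm (PCL) described in the context, run for $T$ iterations with any ordering $p_1,\dots,p_n$ of the basic parts and any rule for selecting the part $p^t$ at each iteration, interacting with a conditionally $\alpha$-informative user with $\alpha\in(0,1]$. Then $$\frac{1}{T}\sum_{t=1}^T \mathrm{CREG}_{p^t}(x^t)\le \frac{2DS\|\mathbf{w}^*\|}{\alpha\sqrt{T}}+\frac{1}{\alpha T}\sum_{t=1}^T\zeta^t,$$ where $\|\cdot\|$ is the Euclidean norm and $S:=\max_{p\in\mathcal{P}}|I_p|$.
   Context: Setting. $\mathcal{X}$ is a set of feasible configurations, with feature map $\boldsymbol{\phi}:\mathcal{X}\to\mathbb{R}^m$ satisfying $\|\boldsymbol{\phi}(x)\|_\infty\le D$ for all $x\in\mathcal{X}$. The (unknown) true utility is $u^*(x)=\langle\mathbf{w}^*,\boldsymbol{\phi}(x)\rangle$ with $\mathbf{w}^*\in\mathbb{R}^m$. There is a finite set $\mathcal{P}$ of $n$ basic parts; for $p\in\mathcal{P}$, $x_p\in\mathcal{X}_p$ is the partial configuration of $x$ on $p$ and $x_{\overline{p}}$ the partial configuration on $\overline{p}=\mathcal{P}\setminus\{p\}$; the combination operator satisfies $x=x_p\circ x_{\overline p}$, and $y_p\circ x_{\overline p}$ (for $y_p\in\mathcal{X}_p$) is the configuration obtained from $x$ by replacing its $p$-portion by $y_p$. Each basic part $p$ has a feature subset $I_p\subseteq[m]$ consisting exactly of the features that depend on $x_p$ (for $i\notin I_p$, $\phi_i(x)$ does not change when $x_p$ changes with $x_{\overline p}$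 fixed); each $I_p$ contains at least one index not in any $I_q$, $q\ne p$, and $\bigcup_p I_p=[m]$. For a weight vector $\mathbf{w}$ and $Q\subseteq[m]$, write $u[Q](x)=\sum_{i\in Q}w_i\phi_i(x)$; $u^*[Q]$ uses $\mathbf{w}^*$ and $u^t[Q]$ uses $\mathbf{w}^t$. Conditional regret: $\mathrm{CREG}_p(x)=u^*(x^*_p\circ x_{\overline p})-u^*(x)$ where $x^*_p\in\arg\max_{y_p\in\mathcal{X}_p}u^*(y_p\circ x_{\overline p})$ (maxima assumed to exist). Algorithm PCL. Fix an ordering $p_1,\dots,p_n$ of $\mathcal{P}$ and let $J_k:=I_{p_k}\setminus\bigcup_{j=k+1}^n I_{p_j}$. Set $\mathbf{w}^1=0$ and an initial configuration $x^0\in\mathcal{X}$. For $t=1,\dots,T$: select a basic part $p^t=p_k$ and write $I^t=I_{p_k}$, $J^t=J_k$; define $x^t$ by $x^t_{\overline{p^t}}=x^{t-1}_{\overline{p^t}}$ and $x^t_{p^t}\in\arg\max_{y\in\mathcal{X}_{p^t}}u^t[J^t](y\circ x^{t-1}_{\overline{p^t}})$. The user returns an improvement $\hat x^t_{p^t}\in\mathcal{X}_{p^t}$ (returning $\hat x^t_{p^t}=x^t_{p^t}$ if it cannot be improved); write $\hat x^t=\hat x^t_{p^t}\circ x^t_{\overline{p^t}}$. If $u^t[I^t](\hat x^t)-u^t[I^t](x^t)\le0$ set $Q^t=I^t$, otherwise $Q^t=J^t$. Update $w^{t+1}_i=w^t_i$ for $i\notin Q^t$ and $w^{t+1}_i=w^t_i+\phi_i(\hat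 x^t)-\phi_i(x^t)$ for $i\in Q^t$. Conditional $\alpha$-informativeness: for all $t$, $u^*[I^t](\hat x^t)-u^*[I^t](x^t)\ge\alpha\big(u^*[I^t](x^*_{p^t}\circ x^t_{\overline{p^t}})-u^*[I^t](x^t)\big)$, where $x^*_{p^t}\in\arg\max_{y\in\mathcal{X}_{p^t}}u^*(y\circ x^t_{\overline{p^t}})$. Missing utility gain: $\zeta^t=0$ if $Q^t=I^t$, and $\zeta^t=u^*[I^t\setminus J^t](\hat x^t)-u^*[I^t\setminus J^t](x^t)$ if $Q^t=J^t$. *)

(* Defs.v *)
From HB Require Import structures.
From mathcomp Require Import all_boot all_order all_algebra.
Set Implicit Arguments. Unset Strict Implicit. Unset Printing Implicit Defensive.
Import Order.TTheory GRing.Theory Num.Theory.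
Local Open Scope ring_scope.

Section PCL.
Variables (R : rcfType) (m : nat) (X : Type).

Definition util (phi : X -> 'I_m -> R) (w : 'I_m -> R) (Q : {set 'I_m}) (x : X) : R :=
  \sum_(i in Q) w i * phi x i.

Definition enorm (w : 'I_m -> R) : R := Num.sqrt (\sum_i w i ^+ 2).

Variables (P : finType) (n : nat).

Definition Jset (I : P -> {set 'I_m}) (ord : 'I_n -> P) (k : 'I_n) : {set 'I_m} :=
  I (ord k) :\: \bigcup_(j : 'I_n | (k < j)%N) I (ord j).

Definition Smax (I : P -> {set 'I_m}) : nat := \max_(p : P) #|I p|.

Definition Qset (phi : X -> 'I_m -> R) (w : 'I_m -> R) (It Jt : {set 'I_m})
  (x xhat : X) : {set 'I_m} :=
  if util phi w It xhat - util phi w It x <= 0 then It else Jt.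

Definition zeta (phi : X -> 'I_m -> R) (wstar w : 'I_m -> R) (It Jt : {set 'I_m})
  (x xhat : X) : R :=
  if util phi w It xhat - util phi w It x <= 0 then 0
  else util phi wstar (It :\: Jt) xhat - util phi wstar (It :\: Jt) x.

End PCL.

(* Main.v *)
Require Import Defs.
From HB Require Import structures.
From mathcomp Require Import all_boot all_order all_algebra.
From mathcomp Require Import ring lra.
Import Order.TTheory GRing.Theory Num.Theory.
Local Open Scope ring_scope.


Lemma cs_ineq (R : rcfType) m (a b : 'I_m -> R) :
  \sum_i a i * b i <= Num.sqrt (\sum_i a i ^+ 2) * Num.sqrt (\sum_i b i ^+ 2).
Proof.
set A := \sum_i a i ^+ 2; set B := \sum_i b i ^+ 2; set d := \sum_i a i * b i.
have E : \sum_i \sum_j (a i * b j - a j * b i) ^+ 2 = 2%:R * (A * B - d ^+ 2).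
  transitivity (\sum_i \sum_j (a i ^+ 2 * b j ^+ 2 + b i ^+ 2 * a j ^+ 2
      - (2%:R * (a i * b i)) * (a j * b j))).
    by apply: eq_bigr => i _; apply: eq_bigr => j _; ring.
  transitivity (\sum_i (a i ^+ 2 * B + b i ^+ 2 * A - (2%:R * (a i * b i)) * d)).
    apply: eq_bigr => i _.
    by rewrite big_split big_split /= sumrN -!mulr_sumr.
  rewrite big_split big_split /= sumrN -!mulr_suml -mulr_sumr.
  rewrite -/A -/B -/d; ring.
have A0 : 0 <= A by apply: sumr_ge0 => i _; apply: sqr_ge0.
have : 0 <= \sum_i \sum_j (a i * b j - a j * b i) ^+ 2.
  by apply: sumr_ge0 => i _; apply: sumr_ge0 => j _; apply: sqr_ge0.
rewrite E => h.
have h2 : d ^+ 2 <= A * B by nra.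
apply: le_trans (ler_norm d) _.
rewrite -sqrtr_sqr -sqrtrM //.
exact: ler_wsqrtr.
Qed.

Lemma dotif (R : rcfType) m (a f g : 'I_m -> R) (Q : {set 'I_m}) :
  \sum_i a i * (if i \in Q then f i - g i else 0) =
  \sum_(i in Q) a i * f i - \sum_(i in Q) a i * g i.
Proof.
rewrite -sumrB [RHS]big_mkcond; apply: eq_bigr => i _.
by case: (i \in Q); rewrite ?mulr0 // mulrBr.
Qed.

Lemma splitsub (R : rcfType) m (F : 'I_m -> R) (I J : {set 'I_m}) :
  J \subset I -> \sum_(i in I) F i = \sum_(i in J) F i + \sum_(i in I :\: J) F i.
Proof. by move=> sJI; rewrite (big_setID J) (setIidPr sJI). Qed.

Lemma sqexp (R : rcfType) m (a b : 'I_m -> R) :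
  \sum_i (a i + b i) ^+ 2 = \sum_i a i ^+ 2 + 2%:R * \sum_i a i * b i + \sum_i b i ^+ 2.
Proof.
rewrite (eq_bigr (fun i => a i ^+ 2 + 2%:R * (a i * b i) + b i ^+ 2)); last by move=> i _; ring.
by rewrite big_split big_split /= -mulr_sumr.
Qed.

Lemma sumD (R : rcfType) m (c a b : 'I_m -> R) :
  \sum_i c i * (a i + b i) = \sum_i c i * a i + \sum_i c i * b i.
Proof. by rewrite -big_split; apply: eq_bigr => i _; rewrite mulrDr. Qed.

Lemma sqrt_nat_le (R : rcfType) (S : nat) : Num.sqrt (S%:R : R) <= S%:R.
Proof.
case: S => [|S]; first by rewrite sqrtr0.
rewrite -[X in _ <= X](@ger0_norm _ (S.+1%:R : R)) // -sqrtr_sqr.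
apply: ler_wsqrtr.
have : (1 : R) <= S.+1%:R by rewrite ler1n.
move=> h; nra.
Qed.

Theorem theorem2
  (R : rcfType) (m : nat) (X : Type) (P : finType) (n : nat)
  (* partial configurations: x_p, and y_p o x_{pbar} *)
  (Xp : P -> Type) (proj : forall p : P, X -> Xp p)
  (replace : forall p : P, Xp p -> X -> X)
  (phi : X -> 'I_m -> R) (D : R) (wstar : 'I_m -> R)
  (I : P -> {set 'I_m}) (ord : 'I_n -> P)
  (* combination operator laws *)
  (h_comb : forall p x, replace p (proj p x) x = x)
  (h_proj : forall p y x, proj p (replace p y x) = y)
  (h_rr : forall p y z x, replace p y (replace p z x) = replace p y x)
  (* bounded features *)
  (hD : forall x i, `|phi x i| <= D)
  (* I_p is exactly the set of features depending on x_p *)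
  (hI_out : forall p i, i \notin I p -> forall y x, phi (replace p y x) i = phi x i)
  (hI_in : forall p i, i \in I p -> exists y x, phi (replace p y x) i != phi x i)
  (hI_own : forall p, exists2 i, i \in I p & forall q, q != p -> i \notin I q)
  (hI_cover : \bigcup_(p : P) I p = [set: 'I_m])
  (* ordering p_1..p_n of the parts *)
  (hord : bijective ord)
  (* the run of PCL *)
  (T : nat) (alpha : R) (halpha : 0 < alpha <= 1)
  (k : nat -> 'I_n)                         (* selection rule: p^t = p_{k t} *)
  (x : nat -> X)                            (* x 0 is the initial configuration *)
  (xp : forall t, Xp (ord (k t)))           (* x^t_{p^t} *)
  (xh : forall t, Xp (ord (k t)))           (* user's improvement hat x^t_{p^t} *)
  (xs : forall t, Xp (ord (k t)))           (* x^*_{p^t} *)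
  (w : nat -> 'I_m -> R)
  (hw1 : w 1%N = (fun _ => 0))
  (hx : forall t, (0 < t <= T)%N ->
     x t = replace (ord (k t)) (xp t) (x t.-1))
  (hxmax : forall t, (0 < t <= T)%N -> forall y,
     util phi (w t) (Jset I ord (k t)) (replace (ord (k t)) y (x t.-1))
       <= util phi (w t) (Jset I ord (k t)) (x t))
  (hw : forall t, (0 < t <= T)%N -> forall i,
     w t.+1 i =
       if i \in Qset phi (w t) (I (ord (k t))) (Jset I ord (k t))
                   (x t) (replace (ord (k t)) (xh t) (x t))
       then w t i + phi (replace (ord (k t)) (xh t) (x t)) i - phi (x t) i
       else w t i)
  (hxs : forall t, (0 < t <= T)%N -> forall y,
     util phi wstar setT (replace (ord (k t)) y (x t))
       <= util phi wstar setT (replace (ord (k t)) (xs t) (x t)))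
  (* user returns x^t_{p^t} when it cannot be improved *)
  (huser_opt : forall t, (0 < t <= T)%N ->
     (forall y, util phi wstar setT (replace (ord (k t)) y (x t))
                  <= util phi wstar setT (x t)) ->
     xh t = proj (ord (k t)) (x t))
  (* conditional alpha-informativeness *)
  (hinf : forall t, (0 < t <= T)%N ->
     util phi wstar (I (ord (k t))) (replace (ord (k t)) (xh t) (x t))
       - util phi wstar (I (ord (k t))) (x t)
     >= alpha * (util phi wstar (I (ord (k t))) (replace (ord (k t)) (xs t) (x t))
                 - util phi wstar (I (ord (k t))) (x t))) :
  (\sum_(1 <= t < T.+1)
      (util phi wstar setT (replace (ord (k t)) (xs t) (x t))
       - util phi wstar setT (x t))) / T%:R
  <= 2%:R * D * (Smax I)%:R * enorm wstar / (alpha * Num.sqrt T%:R)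
     + (\sum_(1 <= t < T.+1)
          zeta phi wstar (w t) (I (ord (k t))) (Jset I ord (k t))
               (x t) (replace (ord (k t)) (xh t) (x t))) / (alpha * T%:R).
Proof.
move/andP: halpha => [ha0 ha1].
pose xh' t := replace (ord (k t)) (xh t) (x t).
pose Q t := Qset phi (w t) (I (ord (k t))) (Jset I ord (k t)) (x t) (xh' t).
pose Dl t i := if i \in Q t then phi (xh' t) i - phi (x t) i else 0.
have hwD : forall t, (0 < t <= T)%N -> forall i, w t.+1 i = w t i + Dl t i.
  move=> t ht i; rewrite hw // /Dl /Q /xh'; case: ifP => _; [ring | by rewrite addr0].
have JsubI : forall t, Jset I ord (k t) \subset I (ord (k t)).
  by move=> t; apply: subsetDl.
have QsubI : forall t, Q t \subset I (ord (k t)).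
  by move=> t; rewrite /Q /Qset; case: ifP.
have h1 : forall t, (0 < t <= T)%N -> \sum_i w t i * Dl t i <= 0.
  move=> t ht; rewrite /Dl dotif /Q /Qset; case: ifP => // _.
  have e : xh' t = replace (ord (k t)) (xh t) (x t.-1).
    by rewrite /xh' {1}(hx t ht) h_rr.
  rewrite e subr_le0; exact: hxmax.
pose S := (Smax I)%:R : R.
have h2 : forall t, (0 < t <= T)%N -> \sum_i Dl t i ^+ 2 <= 4%:R * D ^+ 2 * S.
  move=> t ht.
  have e : \sum_i Dl t i ^+ 2 = \sum_(i in Q t) (phi (xh' t) i - phi (x t) i) ^+ 2.
    rewrite [RHS]big_mkcond; apply: eq_bigr => i _; rewrite /Dl.
    by case: (i \in Q t) => //; rewrite expr2 mulr0.
  rewrite e.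
  apply: le_trans (_ : \sum_(i in Q t) 4%:R * D ^+ 2 <= _).
    apply: ler_sum => i _.
    have := hD (xh' t) i; have := hD (x t) i.
    rewrite !ler_norml => /andP[? ?] /andP[? ?]; nra.
  rewrite sumr_const -(mulr_natr _ #|Q t|); apply: ler_wpM2l.
    by apply: mulr_ge0 => //; apply: sqr_ge0.
  rewrite ler_nat; apply: leq_trans (subset_leq_card (QsubI t)) _.
  rewrite /Smax; exact: (@leq_bigmax P (fun p => #|I p|) (ord (k t))).
have h3 : forall t, (0 < t <= T)%N -> \sum_i wstar i * Dl t i =
    (util phi wstar (I (ord (k t))) (xh' t) - util phi wstar (I (ord (k t))) (x t))
    - zeta phi wstar (w t) (I (ord (k t))) (Jset I ord (k t)) (x t) (xh' t).
  move=> t ht; rewrite /Dl dotif /Q /Qset /zeta /util; case: ifP => _.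
    by rewrite subr0.
  rewrite !(splitsub _ _ _ _ _ (JsubI t)); ring.
have h4 : forall t, (0 < t <= T)%N ->
    util phi wstar (I (ord (k t))) (replace (ord (k t)) (xs t) (x t))
      - util phi wstar (I (ord (k t))) (x t)
    = util phi wstar setT (replace (ord (k t)) (xs t) (x t))
      - util phi wstar setT (x t).
  move=> t ht; rewrite /util !(@big_setID _ _ _ _ setT (I (ord (k t)))) setTI setTD.
  have e : \sum_(i in ~: I (ord (k t))) wstar i * phi (replace (ord (k t)) (xs t) (x t)) i
         = \sum_(i in ~: I (ord (k t))) wstar i * phi (x t) i.
    by apply: eq_bigr => i; rewrite in_setC => hi; rewrite hI_out.
  rewrite /= e; ring.
have key : forall t, (t <= T)%N ->
  \sum_i w t.+1 i ^+ 2 <= t%:R * (4%:R * D ^+ 2 * S) /\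
  \sum_i wstar i * w t.+1 i = \sum_(1 <= s < t.+1) \sum_i wstar i * Dl s i.
  elim=> [|t IH] ht.
    rewrite hw1 big_geq //; split.
      by rewrite big1 ?mul0r // => i _; rewrite expr2 mulr0.
    by rewrite big1 // => i _; rewrite mulr0.
  have ht' : (0 < t.+1 <= T)%N by rewrite ht.
  have [IH1 IH2] := IH (ltnW ht).
  have ew := hwD _ ht'.
  have hh1 := h1 _ ht'; have hh2 := h2 _ ht'.
  split.
    under eq_bigr => i _ do rewrite ew.
    rewrite sqexp.
    have -> : (t.+1%:R : R) = t%:R + 1 by rewrite -natr1.
    nra.
  under eq_bigr => i _ do rewrite ew.
  by rewrite sumD big_nat_recr //= IH2.
have [K1 K2] := key T (leqnn T).
have lower : \sum_(1 <= t < T.+1)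
    (alpha * (util phi wstar setT (replace (ord (k t)) (xs t) (x t))
       - util phi wstar setT (x t))
     - zeta phi wstar (w t) (I (ord (k t))) (Jset I ord (k t))
               (x t) (replace (ord (k t)) (xh t) (x t)))
   <= \sum_(1 <= t < T.+1) \sum_i wstar i * Dl t i.
  rewrite big_nat [X in _ <= X]big_nat; apply: ler_sum => t /andP[t1 tT].
  have ht : (0 < t <= T)%N by rewrite t1.
  rewrite h3 // -h4 //; have := hinf t ht; rewrite /xh'; lra.
rewrite sumrB -mulr_sumr -K2 in lower.
set Sc := \sum_(1 <= t < T.+1) _ in lower *.
set Sz := \sum_(1 <= t < T.+1) _ in lower *.
set N := enorm wstar.
have N0 : 0 <= N by apply: sqrtr_ge0.
have upper : \sum_i wstar i * w T.+1 i <=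
    N * (Num.sqrt T%:R * Num.sqrt S * `|2%:R * D|).
  apply: le_trans (cs_ineq _ _ _ _) _; apply: ler_wpM2l => //.
  apply: le_trans (ler_wsqrtr K1) _.
  have -> : (T%:R * (4%:R * D ^+ 2 * S) : R) = (T%:R * S) * (2%:R * D) ^+ 2 by ring.
  by rewrite sqrtrM ?mulr_ge0 // sqrtrM // sqrtr_sqr.
have hDN : `|2%:R * D| * N = 2%:R * D * N.
  case: (posnP m) => [m0|mpos].
    have E0 : forall v : 'I_m -> R, enorm v = 0.
      by rewrite m0 => v; rewrite /enorm big_ord0 sqrtr0.
    by rewrite /N E0 !mulr0.
  have D0 : 0 <= D.
    by apply: le_trans (hD (x 0%N) (Ordinal mpos)); apply: normr_ge0.
  by rewrite ger0_norm // mulr_ge0.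
have sqS : Num.sqrt S <= S by apply: sqrt_nat_le.
have S0 : 0 <= S by apply: ler0n.
have dn0 : 0 <= 2%:R * D * N by rewrite -hDN mulr_ge0.
case: (posnP T) => [T0|Tpos].
  rewrite /Sc /Sz T0 !big_geq // sqrtr0 !(mulr0, mul0r, invr0, addr0).
  by [].
set sT := Num.sqrt T%:R in upper *.
have sT0 : 0 < sT by rewrite /sT sqrtr_gt0 ltr0n.
have hT : (T%:R : R) = sT ^+ 2 by rewrite /sT sqr_sqrtr // ler0n.
have bound : alpha * Sc - Sz <= 2%:R * D * N * S * sT.
  have e1 : N * (sT * Num.sqrt S * `|2%:R * D|) = (`|2%:R * D| * N) * Num.sqrt S * sT by ring.
  rewrite e1 hDN in upper.
  have hh : 2%:R * D * N * Num.sqrt S * sT <= 2%:R * D * N * S * sT.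
    by apply: ler_wpM2r; [apply: ltW | apply: ler_wpM2l].
  lra.
rewrite hT -subr_le0.
have -> : Sc / sT ^+ 2 - (2%:R * D * S * N / (alpha * sT) + Sz / (alpha * sT ^+ 2))
   = (alpha * Sc - Sz - 2%:R * D * N * S * sT) / (alpha * sT ^+ 2).
  field; apply/andP; split; rewrite ?gt_eqF //.
apply: mulr_le0_ge0; first lra.
rewrite invr_ge0; apply: mulr_ge0; [exact: ltW | exact: sqr_ge0].
Qed.
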